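(* Let $V$ be a vector space over a field $F$ and $T\in OP(V)$ have a vanishing polynomial, with minimal polynomial $p_m(x)=\sum_{i=0}^m a_ix^i$. If $T$ is surjective, then $a_0\neq0$ and $T$ is bijective.
   Context: $OP(V)$ is the set of all (not necessarily linear) maps $V\to V$; $T^0=I$, $T^{i}=T\circ T^{i-1}$, and for $p(x)=\sum a_ix^i$, $p(T)(v)=\sum a_iT^i(v)$. A vanishing polynomial of $T$ is a nonzero $p\in F[x]$ with $p(T)(v)=0$ for all $v$. The minimal polynomial of $T$ is the unique monic vanishing polynomial of $T$ of least degree. *)

(* Defs.v *)
From mathcomp Require Import all_boot all_order all_algebra.
Set Implicit Arguments. Unset Strict Implicit. Unset Printing Implicit Defensive.
Import GRing.Theory.
Local Open Scope ring_scope.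

(* p(T)(v) = sum_i a_i T^i(v), with T^0 = id, T^i = T o T^(i-1); T an
   arbitrary (not necessarily linear) map V -> V. *)
Definition op_eval (F : fieldType) (V : lmodType F) (p : {poly F}) (T : V -> V)
  (v : V) : V := \sum_(i < size p) p`_i *: iter i T v.

Definition vanishing_poly (F : fieldType) (V : lmodType F) (T : V -> V)
  (p : {poly F}) : Prop := p != 0 /\ forall v, op_eval p T v = 0.

Definition is_min_poly (F : fieldType) (V : lmodType F) (T : V -> V)
  (p : {poly F}) : Prop :=
  [/\ p \is monic, vanishing_poly T p &
      forall q, q \is monic -> vanishing_poly T q -> (size p <= size q)%N].

(* Main.v *)
Require Import Defs.
From mathcomp Require Import all_boot all_order all_algebra.
Local Open Scope ring_scope.
Import GRing.Theory.

Lemma op_eval_big (F : fieldType) (V : lmodType F) (T : V -> V) (p : {poly F}) v n :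
  (size p <= n)%N -> op_eval p T v = \sum_(i < n) p`_i *: iter i T v.
Proof.
move=> H; rewrite /op_eval (big_ord_widen n (fun i => p`_i *: iter i T v) H).
rewrite big_mkcond /=; apply: eq_bigr => i _.
by case: ifP => // /negbT; rewrite -leqNgt => /(nth_default 0) ->; rewrite scale0r.
Qed.

Lemma op_eval_dec (F : fieldType) (V : lmodType F) (T : V -> V) (p : {poly F}) v n :
  size p = n.+1 ->
  op_eval p T v = p`_0 *: v + op_eval (\poly_(i < n) p`_i.+1) T (T v).
Proof.
move=> Hs; rewrite (@op_eval_big _ _ T p v _ (leqnn _)) Hs big_ord_recl /=.
rewrite (@op_eval_big _ _ T _ (T v) _ (size_poly _ _)); congr (_ + _).
by apply: eq_bigr => i _; rewrite coef_poly ltn_ord -iterSr.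
Qed.

Theorem mainTheorem14 (F : fieldType) (V : lmodType F) (T : V -> V)
  (p : {poly F}) :
  (exists q, vanishing_poly T q) ->
  is_min_poly T p ->
  (forall w : V, exists v, T v = w) ->
  p`_0 != 0 /\ bijective T.
Proof.
move=> _ [pm [pn0 pv] pmin] surj.
have : size p != 0%N by rewrite size_poly_eq0.
case Hs: (size p) => [//|n] _.
set q := \poly_(i < n) p`_i.+1.
have a0 : p`_0 != 0.
  apply/negP => /eqP a0.
  have qv : forall w, op_eval q T w = 0.
    move=> w; have [v <-] := surj w.
    by have := pv v; rewrite (@op_eval_dec _ _ T p v _ Hs) a0 scale0r add0r.
  have ln : lead_coef p = 1 by apply/eqP.
  case: n Hs @q qv => [|n] Hs q qv.
    by move: ln; rewrite lead_coefE Hs /= a0 => /eqP; rewrite eq_sym oner_eq0.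
  have qn : q`_n = 1 by rewrite coef_poly ltnSn -ln lead_coefE Hs.
  have sq : size q = n.+1.
    apply/eqP; rewrite eqn_leq size_poly /=.
    by rewrite ltnNge; apply/negP => /(nth_default 0); rewrite qn => /eqP; rewrite oner_eq0.
  have qm : q \is monic by rewrite monicE lead_coefE sq qn.
  have := pmin q qm (conj (monic_neq0 qm) qv).
  by rewrite Hs sq ltnn.
split=> //.
exists (fun w => - (p`_0)^-1 *: op_eval q T w).
  move=> v; have := pv v; rewrite (@op_eval_dec _ _ T p v _ Hs) => /eqP.
  rewrite addr_eq0 => /eqP E.
  by rewrite -[in RHS](scale1r v) -(mulVf a0) -scalerA E scalerN scaleNr.
move=> w; have [v <-] := surj w; congr T.
have := pv v; rewrite (@op_eval_dec _ _ T p v _ Hs) => /eqP.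
rewrite addr_eq0 => /eqP E.
by rewrite -[in RHS](scale1r v) -(mulVf a0) -scalerA E scalerN scaleNr.
Qed.
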